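(* Let $K\in\mathbb{N}$ and $f_1,\dots,f_K\in\mathcal{S}'(\mathbb{Z}^{d})$. Define $d:\mathbb{Z}^d\to\mathbb{C}$ by $d(\mathbf{n})=\max\{|f_1(\mathbf{n})|,\dots,|f_K(\mathbf{n})|\}$. Then $d\in\mathcal{S}'(\mathbb{Z}^{d})$ and $d$ is a greatest common divisor of $f_1,\dots,f_K$ in $\mathcal{S}'(\mathbb{Z}^{d})$: $d$ divides each $f_k$, and every common divisor $\tilde d\in\mathcal{S}'(\mathbb{Z}^{d})$ of $f_1,\dots,f_K$ divides $d$. (In particular every finite family has a gcd, unique up to invertible factors.)
   Context: For $\mathbf{n}=(n_1,\dots,n_d)\in\mathbb{Z}^d$ write $\|\mathbf{n}\|:=|n_1|+\cdots+|n_d|$. $\mathcal{S}'(\mathbb{Z}^{d})$ denotes the set of all maps $f:\mathbb{Z}^d\to\mathbb{C}$ of at most polynomial growth, i.e. for which there exist a real $M>0$ and an integer $m\geq 0$ with $|f(\mathbf{n})|\leq M(1+\|\mathbf{n}\|)^m$ for all $\mathbf{n}\in\mathbb{Z}^d$. It is a commutative unital ring under pointwise addition and multiplication, with unit the constant function $1$. Divisibility refers to this ring. *)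

(* Defs.v *)
From Stdlib Require Import Reals ZArith List.
From Coquelicot Require Import Coquelicot.
Import ListNotations.
Open Scope R_scope.

Definition Zd (d : nat) : Type := { v : list Z | length v = d }.

Definition znorm {d : nat} (n : Zd d) : R :=
  IZR (fold_right (fun z acc => (Z.abs z + acc)%Z) 0%Z (proj1_sig n)).

(* f in S'(Z^d): at most polynomial growth. *)
Definition tempered {d : nat} (f : Zd d -> C) : Prop :=
  exists (M : R) (m : nat), 0 < M /\
    forall n : Zd d, Cmod (f n) <= M * (1 + znorm n) ^ m.

Definition sdvd {d : nat} (g f : Zd d -> C) : Prop :=
  exists h : Zd d -> C, tempered h /\ forall n : Zd d, f n = Cmult (h n) (g n).

(* d(n) = max{|f_1(n)|, ..., |f_K(n)|}  (family indexed by k = 0..K-1;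
   the empty maximum is 0). *)
Definition maxabs {d : nat} (K : nat) (f : nat -> Zd d -> C) : Zd d -> C :=
  fun n => RtoC (fold_right Rmax 0 (map (fun k => Cmod (f k n)) (seq 0 K))).

(* Main.v *)
Require Import Defs.
From Stdlib Require Import Reals ZArith List Lia Lra.
From Coquelicot Require Import Coquelicot.

Lemma fold_nonneg (F : nat -> R) (l : list nat) :
  0 <= fold_right Rmax 0 (map F l).
Proof.
  induction l as [|a l IH]; simpl; [lra|].
  eapply Rle_trans; [exact IH| apply Rmax_r].
Qed.

Lemma fold_ge (F : nat -> R) (l : list nat) k :
  In k l -> F k <= fold_right Rmax 0 (map F l).
Proof.
  induction l as [|a l IH]; simpl; [tauto|].
  intros [->|H]; [apply Rmax_l|].
  eapply Rle_trans; [exact (IH H)| apply Rmax_r].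
Qed.

Lemma fold_le (F : nat -> R) (l : list nat) B :
  0 <= B -> (forall k, In k l -> F k <= B) -> fold_right Rmax 0 (map F l) <= B.
Proof.
  intros HB; induction l as [|a l IH]; simpl; intros H; [lra|].
  apply Rmax_lub; auto.
Qed.

Lemma znorm_nonneg {d : nat} (n : Zd d) : 0 <= znorm n.
Proof.
  unfold znorm. apply IZR_le.
  destruct n as [v Hv]; simpl. clear Hv. induction v as [|a v IH]; simpl; lia.
Qed.

Lemma uniform {d : nat} (A : nat -> Zd d -> R) (w : Zd d -> R)
  (hw : forall n, 0 <= w n) (K : nat) :
  (forall k, (k < K)%nat -> exists M m, 0 < M /\
     forall n, A k n <= M * (1 + znorm n) ^ m * w n) ->
  exists M m, 0 < M /\ forall k, (k < K)%nat ->
     forall n, A k n <= M * (1 + znorm n) ^ m * w n.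
Proof.
  induction K as [|K IH]; intros H.
  - exists 1, 0%nat. split; [lra|]. intros; lia.
  - destruct IH as [M1 [m1 [HM1 H1]]].
    { intros k Hk. apply H. lia. }
    destruct (H K ltac:(lia)) as [M2 [m2 [HM2 H2]]].
    exists (M1 + M2), (m1 + m2)%nat. split; [lra|].
    intros k Hk n.
    assert (Hx : 1 <= 1 + znorm n) by (pose proof (znorm_nonneg n); lra).
    assert (Hp1 : (1 + znorm n) ^ m1 <= (1 + znorm n) ^ (m1 + m2))
      by (apply Rle_pow; [lra|lia]).
    assert (Hp2 : (1 + znorm n) ^ m2 <= (1 + znorm n) ^ (m1 + m2))
      by (apply Rle_pow; [lra|lia]).
    assert (Hq1 : 0 <= (1 + znorm n) ^ m1) by (apply pow_le; lra).
    assert (Hq2 : 0 <= (1 + znorm n) ^ m2) by (apply pow_le; lra).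
    pose proof (hw n) as Hwn.
    assert (HB : M1 * (1 + znorm n) ^ m1 * w n <= (M1 + M2) * (1 + znorm n) ^ (m1 + m2) * w n
              /\ M2 * (1 + znorm n) ^ m2 * w n <= (M1 + M2) * (1 + znorm n) ^ (m1 + m2) * w n).
    { split; apply Rmult_le_compat_r; auto;
      apply Rmult_le_compat; lra. }
    destruct (Nat.lt_ge_cases k K) as [Hl|Hg].
    + pose proof (H1 k Hl n). lra.
    + assert (k = K) by lia. subst. pose proof (H2 n). lra.
Qed.

Theorem proposition2p2 (d K : nat) (f : nat -> Zd d -> C)
  (hf : forall k : nat, (k < K)%nat -> tempered (f k)) :
  tempered (maxabs K f) /\
  (forall k : nat, (k < K)%nat -> sdvd (maxabs K f) (f k)) /\
  (forall dt : Zd d -> C, tempered dt ->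
     (forall k : nat, (k < K)%nat -> sdvd dt (f k)) -> sdvd dt (maxabs K f)).
Proof.
  set (D := fun n => fold_right Rmax 0 (map (fun k => Cmod (f k n)) (seq 0 K))).
  assert (HDnn : forall n, 0 <= D n) by (intros; apply fold_nonneg).
  assert (HDge : forall k n, (k < K)%nat -> Cmod (f k n) <= D n).
  { intros k n Hk. apply (fold_ge (fun k => Cmod (f k n))). apply in_seq. lia. }
  assert (HmD : forall n, Cmod (maxabs K f n) = D n).
  { intros n. unfold maxabs. rewrite Cmod_R. apply Rabs_pos_eq. apply HDnn. }
  split; [|split].
  - destruct (uniform (fun k n => Cmod (f k n)) (fun _ => 1) ltac:(intros; lra) K)
      as [M [m [HM HB]]].
    { intros k Hk. destruct (hf k Hk) as [M [m [HM HB]]]. exists M, m.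
      split; auto. intros n. rewrite Rmult_1_r. apply HB. }
    exists M, m. split; auto. intros n. rewrite HmD.
    apply fold_le.
    + apply Rmult_le_pos; [lra|]. apply pow_le.
      pose proof (znorm_nonneg n); lra.
    + intros k Hk. apply in_seq in Hk. rewrite <- (Rmult_1_r (M * _)).
      apply HB. lia.
  - intros k Hk.
    exists (fun n => match Req_EM_T (D n) 0 with
                     | left _ => RtoC 0 | right _ => Cdiv (f k n) (maxabs K f n) end).
    split.
    + exists 1, 0%nat. split; [lra|]. intros n. simpl. rewrite Rmult_1_r.
      destruct (Req_EM_T (D n) 0) as [E|E].
      * rewrite Cmod_0. lra.
      * assert (Hne : maxabs K f n <> 0).
        { intro Z. apply E. rewrite <- HmD, Z. apply Cmod_0. }
        rewrite Cmod_div; auto. rewrite HmD.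
        apply (Rmult_le_reg_r (D n)). { pose proof (HDnn n); lra. }
        unfold Rdiv. rewrite Rmult_assoc, Rinv_l; auto.
        pose proof (HDge k n Hk). lra.
    + intros n. destruct (Req_EM_T (D n) 0) as [E|E].
      * rewrite Cmult_0_l. apply Cmod_eq_0. pose proof (HDge k n Hk). pose proof (Cmod_ge_0 (f k n)).
        lra.
      * assert (Hne : maxabs K f n <> 0).
        { intro Z. apply E. rewrite <- HmD, Z. apply Cmod_0. }
        unfold Cdiv. rewrite <- Cmult_assoc, Cinv_l; auto. now rewrite Cmult_1_r.
  - intros dt _ Hdv.
    destruct (uniform (fun k n => Cmod (f k n)) (fun n => Cmod (dt n))
                (fun n => Cmod_ge_0 _) K) as [M [m [HM HB]]].
    { intros k Hk. destruct (Hdv k Hk) as [h [[M [m [HM Hh]]] Heq]].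
      exists M, m. split; auto. intros n. rewrite Heq, Cmod_mult.
      apply Rmult_le_compat_r; [apply Cmod_ge_0|apply Hh]. }
    assert (HDle : forall n, D n <= M * (1 + znorm n) ^ m * Cmod (dt n)).
    { intros n. apply fold_le.
      - apply Rmult_le_pos; [|apply Cmod_ge_0]. apply Rmult_le_pos; [lra|].
        apply pow_le. pose proof (znorm_nonneg n); lra.
      - intros k Hk. apply in_seq in Hk. apply HB. lia. }
    exists (fun n => match Req_EM_T (Cmod (dt n)) 0 with
                     | left _ => RtoC 0 | right _ => Cdiv (maxabs K f n) (dt n) end).
    split.
    + exists M, m. split; auto. intros n.
      assert (Hp : 0 <= M * (1 + znorm n) ^ m).
      { apply Rmult_le_pos; [lra|]. apply pow_le. pose proof (znorm_nonneg n); lra. }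
      destruct (Req_EM_T (Cmod (dt n)) 0) as [E|E].
      * rewrite Cmod_0. lra.
      * assert (Hne : dt n <> 0).
        { intro Z. apply E. rewrite Z. apply Cmod_0. }
        rewrite Cmod_div; auto. rewrite HmD.
        pose proof (Cmod_ge_0 (dt n)).
        apply (Rmult_le_reg_r (Cmod (dt n))). { lra. }
        unfold Rdiv. rewrite Rmult_assoc, Rinv_l; auto.
        pose proof (HDle n). lra.
    + intros n. destruct (Req_EM_T (Cmod (dt n)) 0) as [E|E].
      * rewrite Cmult_0_l. apply Cmod_eq_0. rewrite HmD. pose proof (HDle n). rewrite E in H.
        pose proof (HDnn n). lra.
      * assert (Hne : dt n <> 0).
        { intro Z. apply E. rewrite Z. apply Cmod_0. }
        unfold Cdiv. rewrite <- Cmult_assoc, Cinv_l; auto. now rewrite Cmult_1_r.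
Qed.
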